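(* Let $w,k$ be positive integers and let $x$ be an integer with $2\le x\le p^k-1$. Let $N$ be the least period of the sequence $(T_n^i(x)\bmod p^w)_{i\ge0}$ and let $M=\max\{t\ge 0 : T_n^N(x)\equiv x\pmod{p^t}\}$. If $k>M$, then the least period of the sequence $(T_n^i(x)\bmod p^k)_{i\ge 0}$ is larger than $N$.
   Context: $p$ is a prime with $p>3$ and $n>1$ is an integer with $\gcd(n,p)=\gcd(n,p^2-1)=1$ (so $T_n$ induces a permutation of $\mathbb{Z}_{p^j}$ for every $j\ge1$). $T_n(x)\in\mathbb{Z}[x]$ is the Chebyshev polynomial of the first kind: $T_0=1$, $T_1=x$, $T_d=2xT_{d-1}-T_{d-2}$. $T_n^i$ is the $i$-fold composition of $T_n$ with itself ($T_n^0(x)=x$), evaluated over $\mathbb{Z}$; it equals $T_{n^i}$. The least period of $(T_n^i(x)\bmod p^j)_{i\ge0}$ is the least positive integer $N$ with $T_n^N(x)\equiv x\pmod{p^j}$. *)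

(* Defs.v *)
From mathcomp Require Import all_boot all_order all_algebra.
Set Implicit Arguments. Unset Strict Implicit. Unset Printing Implicit Defensive.
Import Order.TTheory GRing.Theory Num.Theory.
Local Open Scope ring_scope.

(* (T_d(x), T_{d+1}(x)) computed by the recurrence T_0 = 1, T_1 = x,
   T_{d+2} = 2 x T_{d+1} - T_d, evaluated over Z. *)
Fixpoint cheb_pair (d : nat) (x : int) : int * int :=
  match d with
  | O => (1, x)
  | S d' => let (a, b) := cheb_pair d' x in (b, 2 * x * b - a)
  end.

Definition cheb (d : nat) (x : int) : int := (cheb_pair d x).1.

Definition cheb_iter (n i : nat) (x : int) : int := iter i (cheb n) x.

Definition least_period (n p j : nat) (x : int) (N : nat) : Prop :=
  (0 < N)%N /\ (cheb_iter n N x == x %[mod (p ^ j)%N%:Z])%Z /\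
  (forall i : nat, (0 < i < N)%N -> ~~ (cheb_iter n i x == x %[mod (p ^ j)%N%:Z])%Z).

(* Main.v *)
Require Import Defs.
From HB Require Import structures.
From mathcomp Require Import all_boot all_order all_algebra all_fingroup all_solvable.
From mathcomp Require Import ring zify.
Import Order.TTheory GRing.Theory Num.Theory.
Local Open Scope ring_scope.

Lemma chebE d x : cheb_pair d x = (cheb d x, cheb d.+1 x).
Proof. by rewrite /cheb /=; case: (cheb_pair d x). Qed.

Lemma cheb0 x : cheb 0 x = 1. Proof. by []. Qed.
Lemma cheb1 x : cheb 1 x = x. Proof. by []. Qed.
Lemma chebSS d x : cheb d.+2 x = 2 * x * cheb d.+1 x - cheb d x.
Proof. by rewrite /cheb /=; case: (cheb_pair d x). Qed.

Lemma cheb_prod x n : forall r, 2 * cheb (r + n) x * cheb n x = cheb (r + n + n) x + cheb r x.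
Proof.
have H : forall n, (forall r, 2 * cheb (r + n) x * cheb n x = cheb (r + n + n) x + cheb r x) /\
                   (forall r, 2 * cheb (r + n.+1) x * cheb n.+1 x = cheb (r + n.+1 + n.+1) x + cheb r x).
  elim=> [|m [IH1 IH2]].
    split=> r; rewrite ?addn0 ?cheb0 ?cheb1; first ring.
    rewrite !addn1 chebSS. ring.
  split=> // r.
  have e1 := IH2 r.+1; have e2 := IH1 r.+2.
  have -> : (r + m.+2 = (r + m).+2)%N by lia.
  have -> : ((r + m).+2 + m.+2 = (r + m + m).+4)%N by lia.
  have E1 : (r.+1 + m.+1 = (r + m).+2)%N by lia.
  have E2 : ((r + m).+2 + m.+1 = (r + m + m).+3)%N by lia.
  have E3 : (r.+2 + m = (r + m).+2)%N by lia.
  have E4 : ((r + m).+2 + m = (r + m + m).+2)%N by lia.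
  rewrite E1 E2 in e1; rewrite E3 E4 in e2.
  rewrite [cheb m.+2 x]chebSS [cheb (r + m + m).+4 x]chebSS [cheb r.+2 x]chebSS in e2 *.
  rewrite mulrBr.
  have -> : 2 * cheb (r + m).+2 x * (2 * x * cheb m.+1 x) = 2 * x * (2 * cheb (r+m).+2 x * cheb m.+1 x) by ring.
  rewrite e1 e2; ring.
by case: (H n).
Qed.

Lemma cheb_comp x b : forall a, cheb a (cheb b x) = cheb (a * b) x.
Proof.
have H : forall a, cheb a (cheb b x) = cheb (a * b) x /\ cheb a.+1 (cheb b x) = cheb (a.+1 * b) x.
  elim=> [|a [IH1 IH2]]; first by rewrite mul1n.
  split=> //.
  rewrite chebSS IH1 IH2.
  have := cheb_prod x b (a * b).
  have -> : (a * b + b = a.+1 * b)%N by rewrite mulSn addnC.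
  have -> : (a.+1 * b + b = a.+2 * b)%N by rewrite [in RHS]mulSn addnC.
  move=> e; rewrite -[cheb (a.+2 * b) x]addr0 -(subrr (cheb (a * b) x)) addrA -e; ring.
by move=> a; case: (H a).
Qed.

Lemma cheb_iterE n i x : cheb_iter n i x = cheb (n ^ i) x.
Proof.
elim: i => [|i IH]; first by rewrite expn0.
by rewrite /cheb_iter iterS -/(cheb_iter n i x) IH cheb_comp expnS mulnC.
Qed.
Definition qr (x : int) : Type := (int * int)%type.
HB.instance Definition _ (x : int) := GRing.Zmodule.on (qr x).

Definition qone (x : int) : qr x := (1, 0).
Definition qmul (x : int) (u v : qr x) : qr x :=
  (u.1 * v.1 - u.2 * v.2, u.1 * v.2 + u.2 * v.1 + 2 * x * u.2 * v.2).

Arguments qmul {x}.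
Fact qmulA x : associative (@qmul x).
Proof. by move=> [a b] [c d] [e f]; rewrite /qmul /=; congr pair; ring. Qed.
Fact qmulC x : commutative (@qmul x).
Proof. by move=> [a b] [c d]; rewrite /qmul /=; congr pair; ring. Qed.
Fact qmul1 x : left_id (qone x) (@qmul x).
Proof. by move=> [a b]; rewrite /qmul /=; congr pair; ring. Qed.
Fact qmulDl x : left_distributive (@qmul x) +%R.
Proof.
move=> [a b] [c d] [e f]; rewrite /qmul /=.
have -> : forall u v w z : int, ((u, v) : int * int) + (w, z) = (u + w, v + z) by [].
congr pair; ring.
Qed.
Fact qone_neq0 x : qone x != 0.
Proof. by []. Qed.

HB.instance Definition _ (x : int) := GRing.Zmodule_isComNzRing.Build (qr x)
  (@qmulA x) (@qmulC x) (@qmul1 x) (@qmulDl x) (@qone_neq0 x).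

Lemma qmulE x (u v : qr x) : u * v = qmul u v. Proof. by []. Qed.
Lemma qaddE x (a b c d : int) : ((a, b) : qr x) + ((c, d) : qr x) = ((a + c, b + d) : qr x). Proof. by []. Qed.
Lemma qmulE' x (a b c d : int) : ((a, b) : qr x) * ((c, d) : qr x) =
   ((a * c - b * d, a * d + b * c + 2 * x * b * d) : qr x). Proof. by []. Qed.
Lemma qoneE x : (1 : qr x) = (1, 0). Proof. by []. Qed.
Lemma qnatE x (c : nat) : (c%:R : qr x) = (c%:R, 0).
Proof. elim: c => [|c IH] //; by rewrite !mulrS IH qaddE /= addr0. Qed.

Definition tq (x : int) : qr x := (0, 1).

Lemma cheb_tq x d : cheb d x = (tq x ^+ d).1 + (tq x ^+ d).2 * x.
Proof.
have H : forall d, cheb d x = (tq x ^+ d).1 + (tq x ^+ d).2 * x /\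
                   cheb d.+1 x = (tq x ^+ d.+1).1 + (tq x ^+ d.+1).2 * x.
  elim=> [|e [IH1 IH2]].
    by split; rewrite ?expr0 ?expr1 /= ?cheb0 ?cheb1 /=; ring.
  split=> //.
  rewrite chebSS IH1 IH2 !exprSr.
  case: (tq x ^+ e) => a b.
  rewrite /tq !qmulE' /=; ring.
by case: (H d).
Qed.

Lemma lift1 (R : comPzRingType) (y : R) q : exists F : R, (1 + y) ^+ q = 1 + q%:R * y + y ^+ 2 * F.
Proof.
elim: q => [|q [F IH]]; first by exists 0; rewrite expr0 mul0r mulr0 !addr0.
exists (q%:R + F + F * y); rewrite exprSr IH mulrSr; ring.
Qed.

Lemma lift (R : comPzRingType) (p j : nat) (z : R) : (0 < j)%N ->
  exists w : R, (1 + (p ^ j)%:R * z) ^+ p = 1 + (p ^ j.+1)%:R * w.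
Proof.
case: j => // j _.
have [F ->] := @lift1 R ((p ^ j.+1)%:R * z) p.
exists (z + (p ^ j)%:R * z ^+ 2 * F).
rewrite !natrX !exprS; ring.
Qed.

Lemma pow_mult (R : comPzRingType) (c : R) (z : R) l : exists w : R, (1 + c * z) ^+ l = 1 + c * w.
Proof.
elim: l => [|l [w IH]]; first by exists 0; rewrite expr0 mulr0 addr0.
exists (w + z + c * w * z); rewrite exprSr IH; ring.
Qed.

Lemma qscaleE x (c : nat) (a b : int) : (c%:R : qr x) * ((a, b) : qr x) = ((c%:R * a, c%:R * b) : qr x).
Proof. rewrite qnatE qmulE'; congr pair; ring. Qed.

Definition Mi x (u : qr x) : 'M[int]_2 :=
  \matrix_(i < 2, j < 2)
    (if i == 0 then (if j == 0 then u.1 else - u.2)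
     else (if j == 0 then u.2 else u.1 + 2 * x * u.2)).
Arguments Mi {x}.

Lemma Mi_mul x (u v : qr x) : Mi (u * v) = Mi u *m Mi v.
Proof.
case: u => a b; case: v => c d; rewrite qmulE'.
apply/matrixP => i j; rewrite !mxE !big_ord_recr big_ord0 /= !mxE /=.
case: i => [[|[|i]] Hi] //; case: j => [[|[|j]] Hj] //=; ring.
Qed.

Lemma Mi_one x : Mi (1 : qr x) = 1%:M.
Proof.
rewrite qoneE; apply/matrixP => i j; rewrite !mxE /=.
case: i => [[|[|i]] Hi] //; case: j => [[|[|j]] Hj] //=; ring.
Qed.

Lemma Mi_exp x (u : qr x) m : Mi (u ^+ m) = (Mi u) ^+ m.
Proof.
elim: m => [|m IH]; first by rewrite !expr0 Mi_one.
by rewrite !exprS Mi_mul IH mulmxE.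
Qed.

Lemma map_mxX' (F : nzRingType) (M : 'M[int]_2) m :
  map_mx (intr : int -> F) (M ^+ m) = (map_mx intr M) ^+ m.
Proof.
elim: m => [|m IH]; first by rewrite !expr0; apply: map_mx1.
by rewrite !exprS -!mulmxE map_mxM IH.
Qed.

Lemma modp_step x p : prime p ->
  exists z : qr x, tq x ^+ (p * (p.-1) ^ 2 * p.+1) = 1 + p%:R * z.
Proof.
move=> pr.
pose A : 'M['F_p]_2 := map_mx intr (Mi (tq x)).
pose B : 'M['F_p]_2 := map_mx intr (Mi ((2 * x, -1) : qr x)).
have AB : A *m B = 1%:M.
  rewrite /A /B -map_mxM -Mi_mul.
  have -> : tq x * ((2 * x, -1) : qr x) = 1.
    by rewrite /tq qmulE' qoneE; congr pair; ring.
  by rewrite Mi_one map_mx1.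
have [Hu _] := mulmx1_unit AB.
pose g : {'GL_2['F_p]} := FinRing.Unit Hu.
have cardG : #|GLgroup 2 'F_p| = (p * p.-1 ^ 2 * p.+1)%N.
  by rewrite (card_GL_2 'F_p) card_Fp.
have := @expg_cardG _ (GLgroup_group 2 'F_p) g (in_setT g).
rewrite /= cardG => /(congr1 val); rewrite FinRing.val_unitX /= => Am.
move: Am; rewrite /A -map_mxX' -Mi_exp.
case: (tq x ^+ _) => a b Am.
have e00 := congr1 (fun M : 'M_2 => M 0 0) Am.
have e10 := congr1 (fun M : 'M_2 => M 1 0) Am.
rewrite /= !mxE /= in e00 e10.
have pa : (p %| a - 1)%Z by rewrite (dvdz_pcharf (pchar_Fp pr)) rmorphB /= e00 rmorph1 subrr.
have pb : (p %| b)%Z by rewrite (dvdz_pcharf (pchar_Fp pr)) e10.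
exists (((a - 1) %/ p)%Z, (b %/ p)%Z).
rewrite qscaleE qoneE qaddE natz mulrC divzK //.
congr pair; first ring. by rewrite mulrC divzK // add0r.
Qed.

Lemma lift_all x p : prime p -> forall i,
  exists D : qr x, tq x ^+ (p * (p.-1) ^ 2 * p.+1 * p ^ i) = 1 + (p ^ i.+1)%:R * D.
Proof.
move=> pr; elim=> [|i [D IH]].
  by rewrite expn0 muln1 expn1; apply: modp_step.
rewrite (expnSr p i) mulnA exprM IH.
by apply: lift.
Qed.

Lemma cong_k x p n k : prime p -> (0 < k)%N -> coprime n p -> coprime n (p ^ 2 - 1) ->
  exists i, (0 < i)%N && (cheb_iter n i x == x %[mod (p ^ k)%N%:Z])%Z.
Proof.
move=> pr k0 cnp cnp2.
set m := (p * (p.-1) ^ 2 * p.+1 * p ^ k.-1)%N.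
have [D HD] := @lift_all x p pr k.-1.
rewrite prednK // in HD.
have p0 : (0 < p)%N by apply: prime_gt0.
have m0 : (0 < m)%N.
  rewrite /m !muln_gt0 p0 expn_gt0 p0 /= andbT; have := prime_gt1 pr; lia.
have e2 : (p ^ 2 - 1 = p.-1 * p.+1)%N.
  case: p p0 {pr cnp cnp2 m m0 HD} => // q _; rewrite /=; nia.
have cm : coprime n m.
  rewrite e2 coprimeMr in cnp2; case/andP: cnp2 => c1 c2.
  by rewrite /m !coprimeMr cnp c2 c1 /= (coprimeXr _ cnp).
have eul := Euler_exp_totient cm.
set e := totient m in eul.
have e0 : (0 < e)%N by rewrite totient_gt0.
exists e; rewrite e0 /=.
rewrite cheb_iterE cheb_tq.
have -> : (n ^ e = n ^ e %/ m * m + 1)%N.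
  rewrite {1}(divn_eq (n ^ e) m) eul.
  have m1 : (1 < m)%N.
    rewrite /m -!mulnA; apply: (leq_trans (prime_gt1 pr)); apply: leq_pmulr.
    rewrite !muln_gt0 expn_gt0 p0 /=; have := prime_gt1 pr; lia.
  by rewrite modn_small.
rewrite exprD expr1 mulnC exprM HD.
have [[a b] ->] := @pow_mult _ ((p ^ k)%:R : qr x) D (n ^ e %/ m).
rewrite qscaleE qoneE qaddE /tq qmulE' /=.
rewrite eqz_mod_dvd; apply/dvdzP.
exists (- b + a * x + 2 * x * x * b).
rewrite natz; ring.
Qed.

Theorem lemma10 (p n w k : nat) (x : int) (N M : nat) :
  prime p -> (3 < p)%N -> (1 < n)%N ->
  coprime n p -> coprime n (p ^ 2 - 1) ->
  (0 < w)%N -> (0 < k)%N ->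
  2 <= x -> x <= (p ^ k)%N%:Z - 1 ->
  least_period n p w x N ->
  (* M = max { t >= 0 : T_n^N(x) = x mod p^t } *)
  (cheb_iter n N x == x %[mod (p ^ M)%N%:Z])%Z ->
  (forall t : nat, (cheb_iter n N x == x %[mod (p ^ t)%N%:Z])%Z -> (t <= M)%N) ->
  (M < k)%N ->
  exists N' : nat, least_period n p k x N' /\ (N < N')%N.
Proof.
move=> pr p3 n1 cnp cnp2 w0 k0 x2 xk [N0 [HN HNmin]] HM Hmax Mk.
have ex := @cong_k x p n k pr k0 cnp cnp2.
pose N' := ex_minn ex.
have [i /andP[i0 Hi] Hmin] := ex_minnP ex.
have wM : (w <= M)%N by apply: Hmax.
have Hw : (cheb_iter n i x == x %[mod (p ^ w)%N%:Z])%Z.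
  move: Hi; rewrite !eqz_mod_dvd => H; apply: dvdz_trans H.
  rewrite /dvdz unfold_in /=; apply: dvdn_exp2l; lia.
exists i; split.
  split=> //; split=> // j /andP[j0 ji]; apply/negP => Hj.
  have := Hmin j; rewrite j0 Hj => /(_ isT); lia.
have Ni : (N <= i)%N.
  rewrite leqNgt; apply/negP => iN.
  by have := HNmin i; rewrite i0 iN => /(_ isT); rewrite Hw.
rewrite ltn_neqAle Ni andbT; apply/eqP => eNi; subst i.
have := Hmax k Hi; lia.
Qed.
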